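(* The law $\mathrm{x}\simeq(\mathrm{x}\diamond(\mathrm{x}\diamond\mathrm{y}))\diamond\mathrm{y}$ does not imply the law $\mathrm{x}\simeq(\mathrm{x}\diamond\mathrm{y})\diamond((\mathrm{x}\diamond\mathrm{y})\diamond\mathrm{y})$. Specifically, let $M=\langle a,b,c\mid a^2=b^2=c^2=1\rangle$ (the group of reduced words in $a,b,c$ with no two equal adjacent letters), define $f\colon M\to M$ by $f(1)=1$, $f(a)=b$, $f(b)=c$, $f(c)=a$, and $f(sw)=s$ for each letter $s\in\{a,b,c\}$ and each nonempty reduced word $w$ not starting with $s$; then the magma $(M,\diamond)$ with $x\diamond y=x\,f(x^{-1}y)$ satisfies the first law but not the second.
   Context: A magma satisfies a law if the identity holds for all assignments of variables; a law implies another if every magma satisfying the first satisfies the second. *)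

(* Defs.v *)
From HB Require Import structures.
From mathcomp Require Import all_boot.
Set Implicit Arguments. Unset Strict Implicit. Unset Printing Implicit Defensive.

Definition law1 (T : Type) (op : T -> T -> T) : Prop :=
  forall x y : T, x = op (op x (op x y)) y.
Definition law2 (T : Type) (op : T -> T -> T) : Prop :=
  forall x y : T, x = op (op x y) (op (op x y) y).

Definition letter := 'I_3.
Definition la : letter := @Ordinal 3 0 isT.
Definition lb : letter := @Ordinal 3 1 isT.
Definition lc : letter := @Ordinal 3 2 isT.
Definition lnext (s : letter) : letter :=
  if s == la then lb else if s == lb then lc else la.

Definition reduced (w : seq letter) : bool := sorted (fun x y => x != y) w.

(** Free reduction in <a,b,c | a^2=b^2=c^2=1>. *)
Fixpoint reduce (w : seq letter) : seq letter :=
  match w with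
  | [::] => [::]
  | s :: w' =>
      match reduce w' with
      | t :: r => if s == t then r else s :: t :: r
      | [::] => [:: s]
      end
  end.

Lemma reduce_reduced (w : seq letter) : reduced (reduce w).
Proof.
elim: w => [|s w IH] //=.
case E: (reduce w) IH => [|t r] //= H.
case: ifP => st.
- by case: r H {E} => //= u r /andP [].
- by rewrite /reduced /= st.
Qed.

Definition M : Type := {w : seq letter | reduced w}.
Definition mkM (w : seq letter) : M := exist _ (reduce w) (reduce_reduced w).

Definition Mmul (x y : M) : M := mkM (proj1_sig x ++ proj1_sig y).
Definition Minv (x : M) : M := mkM (rev (proj1_sig x)).

Definition fw (w : seq letter) : seq letter :=
  match w with
  | [::] => [::]
  | [:: s] => [:: lnext s]
  | s :: _ :: _ => [:: s]
  end.
Definition f (x : M) : M := mkM (fw (proj1_sig x)).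

Definition diamond (x y : M) : M := Mmul x (f (Mmul (Minv x) y)).

(* Main.v *)
Require Import Defs.
From mathcomp Require Import all_boot.

Definition step (s : letter) (r : seq letter) : seq letter :=
  match r with t :: r' => if s == t then r' else s :: r | [::] => [:: s] end.

Lemma reduce_cons s w : reduce (s :: w) = step s (reduce w).
Proof. by rewrite /=; case: (reduce w). Qed.

Lemma reduce_id w : reduced w -> reduce w = w.
Proof.
elim: w => [|s w IH] //= H.
have Hw : reduced w by case: w H {IH} => //= t w /andP [].
rewrite (IH Hw).
case: w H {IH Hw} => [|t r] //= /andP [st _].
by rewrite (negbTE st).
Qed.

Lemma reduce_reduce w : reduce (reduce w) = reduce w.
Proof. exact: reduce_id (reduce_reduced w). Qed.

Lemma step_step s w : reduced w -> step s (step s w) = w.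
Proof.
case: w => [|t w]; first by rewrite /= eqxx.
rewrite /=.
case: (eqVneq s t) => [<-|st] H.
- case: w H => [|u w] /=; first by [].
  case/andP => su _. by rewrite /step (negbTE su).
- by rewrite /step eqxx.
Qed.

Lemma reduce_catr u v : reduce (u ++ reduce v) = reduce (u ++ v).
Proof.
elim: u => [|s u IH] /=; first exact: reduce_reduce.
by rewrite IH.
Qed.

Lemma reduce_step_cat s r v : reduce (step s r ++ v) = reduce (s :: r ++ v).
Proof.
case: r => [|t r]; first by [].
case: (eqVneq s t) => [<-|st].
- rewrite {1}/step eqxx cat_cons !reduce_cons step_step // reduce_reduced //.
- by rewrite {1}/step (negbTE st).
Qed.

Lemma reduce_catl u v : reduce (reduce u ++ v) = reduce (u ++ v).
Proof.
elim: u => [|s u IH]; first by [].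
by rewrite [reduce (s :: u)]reduce_cons reduce_step_cat cat_cons !reduce_cons IH.
Qed.

Lemma reduce_revK u : reduce (rev u ++ u) = [::].
Proof.
elim: u => [|s u IH]; first by [].
rewrite rev_cons cat_rcons -reduce_catr.
by rewrite !reduce_cons step_step ?reduce_reduced // reduce_catr.
Qed.

Lemma reduced_rev w : reduced (rev w) = reduced w.
Proof.
rewrite /reduced rev_sorted.
by apply: eq_sorted => // x y; rewrite eq_sym.
Qed.

Lemma Meq (x y : M) : proj1_sig x = proj1_sig y -> x = y.
Proof.
case: x => x Hx; case: y => y Hy /= E; subst y.
by rewrite (bool_irrelevance Hx Hy).
Qed.

Definition M1 : M := exist _ [::] isT.

Lemma val_mul x y : proj1_sig (Mmul x y) = reduce (proj1_sig x ++ proj1_sig y).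
Proof. by []. Qed.

Lemma val_inv x : proj1_sig (Minv x) = rev (proj1_sig x).
Proof. by rewrite /= reduce_id // reduced_rev; case: x. Qed.

Lemma fw_reduced w : reduced (fw w).
Proof. by case: w => [|s [|t w]]. Qed.

Lemma val_f x : proj1_sig (f x) = fw (proj1_sig x).
Proof. by rewrite /= reduce_id // fw_reduced. Qed.

Lemma mulA x y z : Mmul (Mmul x y) z = Mmul x (Mmul y z).
Proof.
apply: Meq; rewrite !val_mul reduce_catl reduce_catr.
by rewrite catA.
Qed.

Lemma mul1 x : Mmul M1 x = x.
Proof. by apply: Meq; rewrite val_mul /= reduce_id //; case: x. Qed.

Lemma mulV x : Mmul (Minv x) x = M1.
Proof. by apply: Meq; rewrite val_mul val_inv reduce_revK. Qed.

Lemma mulVr x : Mmul x (Minv x) = M1.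
Proof.
apply: Meq; rewrite val_mul val_inv.
by rewrite -{1}(revK (proj1_sig x)) reduce_revK.
Qed.

Lemma mulKV x y : Mmul (Minv x) (Mmul x y) = y.
Proof. by rewrite -mulA mulV mul1. Qed.

Lemma mulr1 x : Mmul x M1 = x.
Proof. by apply: Meq; rewrite val_mul /= cats0 reduce_id //; case: x. Qed.

Lemma inv_uniq a b : Mmul a b = M1 -> b = Minv a.
Proof.
move=> H. by rewrite -(mulKV a b) H mulr1.
Qed.

Lemma invM a b : Minv (Mmul a b) = Mmul (Minv b) (Minv a).
Proof.
symmetry; apply: inv_uniq.
by rewrite mulA -(mulA b) mulVr mul1 mulVr.
Qed.

Lemma key_word u : reduced u ->
  fw (reduce (rev (fw (fw u)) ++ u)) = rev (fw (fw u)).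
Proof.
case: u => [|s [|t r]] H.
- by [].
- by case: s {H} => [[|[|[|n]]] Hs].
- have ns : lnext s != s by case: s {H} => [[|[|[|n]]] Hs].
  change (fw (reduce ([:: lnext s] ++ [:: s, t & r])) = [:: lnext s]).
  rewrite reduce_id //.
  by rewrite /reduced /= ns.
Qed.

Lemma key (u : M) : f (Mmul (Minv (f (f u))) u) = Minv (f (f u)).
Proof.
apply: Meq; rewrite val_f val_mul !val_inv !val_f.
by apply: key_word; case: u.
Qed.

Lemma law1_diamond : law1 diamond.
Proof.
move=> x y; rewrite /diamond mulKV.
set u := Mmul (Minv x) y.
by rewrite invM !mulA -/u key mulVr mulr1.
Qed.

Lemma not_law2 : ~ law2 diamond.
Proof.
move=> H; move: (H M1 (exist _ [:: la] isT)) => /(f_equal (@proj1_sig _ _)).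
by vm_compute.
Qed.

Theorem mainTheorem15 :
  law1 diamond /\ ~ law2 diamond /\
  ~ (forall (T : Type) (op : T -> T -> T), law1 op -> law2 op).
Proof.
split; first exact: law1_diamond.
split; first exact: not_law2.
move=> H; apply: not_law2; exact: H law1_diamond.
Qed.
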